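(* A binary PS-algebra $\langle A,f,g\rangle$ satisfies (wMIA): for all $x,y\in A$, if $x\neq0$ and $y\neq0$ then $g(x,y)\leq f(x,y)$, if and only if $S_g\subseteq Q_f$. In particular, for every betweenness frame $\mathfrak F=\langle U,B\rangle$, the full complex algebra $\langle 2^U,\langle B\rangle,[\![B]\!]\rangle$ satisfies $S_{[\![B]\!]}\subseteq Q_{\langle B\rangle}$.
   Context: A PS-algebra is $\langle A,f,g\rangle$ where $A$ is a Boolean algebra with at least two elements and $f,g\colon A^2\to A$ satisfy: $f(x,y)=0$ whenever $x=0$ or $y=0$; $f$ additive in each argument; $g(x,y)=1$ whenever $x=0$ or $y=0$; $g$ co-additive in each argument ($g(x+x',y)=g(x,y)\cdot g(x',y)$, $g(x,y+y')=g(x,y)\cdot g(x,y')$). On the set $\mathrm{Ult}(A)$ of ultrafilters define ternary relations $Q_f(\mathcal U_1,\mathcal U_2,\mathcal U_3)\iff f[\mathcal U_1\times\mathcal U_3]\subseteq\mathcal U_2$ and $S_g(\mathcal U_1,\mathcal U_2,\mathcal U_3)\iff g[\mathcal U_1\times\mathcal U_3]\cap\mathcal U_2\neq\emptyset$. A betweenness frame is $\langle U,B\rangle$, $U\neq\emptyset$, $B\subseteq U^3$, with, for all $a,b,c$: $B(a,a,a)$; $B(a,b,c)\Rightarrow B(c,b,a)$; $B(a,b,c)\Rightarrow B(a,a,b)$; $B(a,b,c)\wedge B(a,c,b)\Rightarrow b=c$. Its complex operators on $2^U$ are $\langle B\rangle(X,Y)=\{u\mid\exists x\in X\,\exists y\in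 Y\,B(x,u,y)\}$ and $[\![B]\!](X,Y)=\{u\mid\forall x\in X\,\forall y\in Y\,B(x,u,y)\}$. *)

(* Defs.v *)
(* Boolean algebras are complemented distributive lattices
   with top and bottom ([ctbDistrLatticeType]); [set U] (mathcomp-classical)
   carries the canonical powerset Boolean algebra instance. *)
From HB Require Import structures.
From mathcomp Require Import all_boot all_order.
From mathcomp Require Import boolp classical_sets.
Set Implicit Arguments. Unset Strict Implicit. Unset Printing Implicit Defensive.
Import Order.TTheory.

Section PS.
Context {disp : Order.disp_t} {A : ctbDistrLatticeType disp}.

Definition ultrafilter (F : set A) : Prop :=
  [/\ F Order.top,
      ~ F Order.bottom,
      (forall x y, F x -> (x <= y)%O -> F y),
      (forall x y, F x -> F y -> F (Order.meet x y))
    & (forall x, F x \/ F (Order.compl x))].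

Definition PS_algebra (f g : A -> A -> A) : Prop :=
  [/\ Order.bottom != Order.top :> A,
      (forall x y, x = Order.bottom \/ y = Order.bottom -> f x y = Order.bottom),
      (forall x x' y, f (Order.join x x') y = Order.join (f x y) (f x' y)),
      (forall x y y', f x (Order.join y y') = Order.join (f x y) (f x y'))
    & [/\ (forall x y, x = Order.bottom \/ y = Order.bottom -> g x y = Order.top),
      (forall x x' y, g (Order.join x x') y = Order.meet (g x y) (g x' y))
    & (forall x y y', g x (Order.join y y') = Order.meet (g x y) (g x y'))]].

Definition Q_rel (f : A -> A -> A) (U1 U2 U3 : set A) : Prop :=
  forall x y, U1 x -> U3 y -> U2 (f x y).

Definition S_rel (g : A -> A -> A) (U1 U2 U3 : set A) : Prop :=
  exists x y, [/\ U1 x, U3 y & U2 (g x y)].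

Definition S_sub_Q (f g : A -> A -> A) : Prop :=
  forall U1 U2 U3 : set A, ultrafilter U1 -> ultrafilter U2 -> ultrafilter U3 ->
    S_rel g U1 U2 U3 -> Q_rel f U1 U2 U3.

Definition wMIA (f g : A -> A -> A) : Prop :=
  forall x y, x != Order.bottom -> y != Order.bottom -> (g x y <= f x y)%O.

End PS.

Definition betweenness_frame (U : Type) (B : U -> U -> U -> Prop) : Prop :=
  [/\ inhabited U,
      (forall a, B a a a),
      (forall a b c, B a b c -> B c b a),
      (forall a b c, B a b c -> B a a b)
    & (forall a b c, B a b c -> B a c b -> b = c)].

Definition diamB (U : Type) (B : U -> U -> U -> Prop) (X Y : set U) : set U :=
  fun u => exists x y, [/\ X x, Y y & B x u y].

Definition boxB (U : Type) (B : U -> U -> U -> Prop) (X Y : set U) : set U :=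
  fun u => forall x y, X x -> Y y -> B x u y.

(* Main.v *)
Require Import Defs.
From HB Require Import structures.
From mathcomp Require Import all_boot all_order.
From mathcomp Require Import boolp classical_sets.
Set Implicit Arguments. Unset Strict Implicit. Unset Printing Implicit Defensive.
Import Order.Theory.

Section UF.
Context {disp : Order.disp_t} {A : ctbDistrLatticeType disp}.
Local Open Scope order_scope.

Definition filt (a : A) (F : set A) : Prop :=
  [/\ F a, ~ F \bot, (forall x y, F x -> x <= y -> F y)
    & (forall x y, F x -> F y -> F (x `&` y))].

Lemma exists_uf (a : A) : a != \bot -> exists F, ultrafilter F /\ F a.
Proof.
move=> a0.
pose P := fun X : set A => X = set0 \/ filt a X.
have [M [PM maxM]] : exists M, P M /\ forall B, (M `<` B)%classic -> ~ P B.
  apply: Zorn_bigcup => C CP Ctot.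
  have [[X [CX XF]]|none] := pselect (exists X, C X /\ filt a X).
  - right; split.
    + by exists X => //; case: XF.
    + case => Y CY Ybot; case: (CP Y CY) => [Y0|[]]; last by [].
      by rewrite Y0 in Ybot.
    + move=> x y [Y CY Yx] xy; exists Y => //.
      case: (CP Y CY) => [Y0|[_ _ up _]]; last exact: up Yx xy.
      by rewrite Y0 in Yx.
    + move=> x y [Y CY Yx] [Z CZ Zy].
      case: (Ctot Y Z CY CZ) => YZ.
      * exists Z => //.
        case: (CP Z CZ) => [Z0|[_ _ _ mc]]; last exact: mc (YZ _ Yx) Zy.
        by rewrite Z0 in Zy.
      * exists Y => //.
        case: (CP Y CY) => [Y0|[_ _ _ mc]]; last exact: mc Yx (YZ _ Zy).
        by rewrite Y0 in Yx.
  - left; apply/seteqP; split => x //= [Y CY Yx].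
    case: (CP Y CY) => [Y0|YF]; first by rewrite Y0 in Yx.
    by exfalso; apply: none; exists Y.
case: PM => [M0|]; last case=> Ma Mb up mc.
  exfalso; apply: (maxM (fun y => a <= y)).
    rewrite M0; split; first by move=> x.
    by move=> /(_ a (lexx a)).
  right; split => //.
  - by rewrite lex0; apply/negP; rewrite (negbTE a0).
  - by move=> x y ax xy; apply: le_trans xy.
  - by move=> x y ax ay; rewrite lexI ax ay.
exists M; split => //; split => //.
- by apply: up Ma _; exact: lex1.
move=> x; case: (pselect (M x)) => Mx; [by left|right].
pose G := fun u => exists2 w, M w & w `&` x <= u.
have : G \bot.
  apply: contrapT => Gb; apply: (maxM G).
    split.
      by move=> u Mu; exists u => //; exact: leIl.
    by move=> GM; apply: Mx; apply: GM; exists a => //; exact: leIr.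
  right; split => //.
  - by exists a => //; exact: leIl.
  - by move=> u y [w Mw wu] uy; exists w => //; apply: le_trans uy.
  - move=> u y [w Mw wu] [v Mv vy]; exists (w `&` v); first exact: mc.
    rewrite lexI; apply/andP; split.
      by apply: le_trans wu; apply: leI2 => //; exact: leIl.
    by apply: le_trans vy; apply: leI2 => //; exact: leIr.
case=> w Mw; rewrite lex0 disj_leC => wx.
exact: up Mw wx.
Qed.

Lemma uf_nbot (F : set A) x : ultrafilter F -> F x -> x != \bot.
Proof. by case=> _ nb _ _ _ Fx; apply/eqP => x0; apply: nb; rewrite -x0. Qed.

Lemma uf_up (F : set A) x y : ultrafilter F -> F x -> x <= y -> F y.
Proof. by case=> _ _ up _ _; exact: up. Qed.

Lemma uf_meet (F : set A) x y : ultrafilter F -> F x -> F y -> F (x `&` y).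
Proof. by case=> _ _ _ mc _; exact: mc. Qed.

Lemma part1 (f g : A -> A -> A) : PS_algebra f g -> (wMIA f g <-> S_sub_Q f g).
Proof.
case=> _ _ fl fr [_ gl gr].
have fmono : forall x x' y y', x <= x' -> y <= y' -> f x y <= f x' y'.
  move=> x x' y y' /join_idPr xx /join_idPr yy.
  apply: (@le_trans _ _ (f x' y)).
    by rewrite -xx fl; exact: leUl.
  by rewrite -yy fr; exact: leUl.
have gmono : forall x x' y y', x <= x' -> y <= y' -> g x' y' <= g x y.
  move=> x x' y y' /join_idPr xx /join_idPr yy.
  apply: (@le_trans _ _ (g x y')).
    by rewrite -xx gl; exact: leIl.
  by rewrite -yy gr; exact: leIl.
split.
- move=> W U1 U2 U3 u1 u2 u3 [x0 [y0 [U1x0 U3y0 U2g]]] x y U1x U3y.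
  have U1m := uf_meet u1 U1x U1x0.
  have U3m := uf_meet u3 U3y U3y0.
  apply: (uf_up u2 U2g).
  apply: (le_trans (gmono _ _ _ _ (leIr x0 x) (leIr y0 y))).
  apply: (le_trans (W _ _ (uf_nbot u1 U1m) (uf_nbot u3 U3m))).
  by apply: fmono; exact: leIl.
- move=> SQ x y x0 y0; apply/negPn/negP => ngf.
  have c0 : g x y `&` ~` f x y != \bot.
    by apply: contra ngf; rewrite disj_leC complK.
  have [U1 [u1 U1x]] := exists_uf x0.
  have [U3 [u3 U3y]] := exists_uf y0.
  have [U2 [u2 U2c]] := exists_uf c0.
  have Sg : S_rel g U1 U2 U3.
    by exists x, y; split => //; apply: (uf_up u2 U2c); exact: leIl.
  have U2f := SQ U1 U2 U3 u1 u2 u3 Sg x y U1x U3y.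
  have := uf_nbot u2 (uf_meet u2 U2c U2f).
  by rewrite -meetA meetCx meetx0 eqxx.
Qed.

End UF.

Lemma part2 (U : Type) (B : U -> U -> U -> Prop) :
  betweenness_frame B -> @S_sub_Q _ (set U) (diamB B) (boxB B).
Proof.
move=> _ U1 U2 U3 u1 u2 u3 [x0 [y0 [U1x0 U3y0 U2g]]] x y U1x U3y.
have n1 := uf_nbot u1 (uf_meet u1 U1x U1x0).
have n3 := uf_nbot u3 (uf_meet u3 U3y U3y0).
rewrite meetEset botEset in n1; rewrite meetEset botEset in n3.
have [a [ax ax0]] := (set0P _).1 n1.
have [b [bx bx0]] := (set0P _).1 n3.
apply: (uf_up u2 U2g); rewrite subsetEset => u bu.
by exists a, b; split => //; apply: bu.
Qed.

Theorem lemma40 :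
  (forall (disp : Order.disp_t) (A : ctbDistrLatticeType disp) (f g : A -> A -> A),
      PS_algebra f g -> (wMIA f g <-> S_sub_Q f g)) /\
  (forall (U : Type) (B : U -> U -> U -> Prop),
      betweenness_frame B -> @S_sub_Q _ (set U) (diamB B) (boxB B)).
Proof.
split; [move=> disp A f g; exact: part1 | exact: part2].
Qed.
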